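(* Let $d>0$ and let $\tilde V\in C^1([-\tfrac d2,\tfrac d2])$ be even. Let $\tilde\lambda_1<\tilde\lambda_2$ be the first two eigenvalues and $\tilde\phi_1>0$ the first eigenfunction of $-\tilde u''+\tilde V\tilde u=\tilde\lambda\tilde u$ on $(-\tfrac d2,\tfrac d2)$, $\tilde u(\pm\tfrac d2)=0$. Set $\tilde\alpha:=-\sup_{\tau\in(-\frac d2,\frac d2)}(\log\tilde\phi_1)''(\tau)$. Then for every $s\in(0,1)$, $$\tilde\lambda_2-\tilde\lambda_1\ \ge\ 4s(1-s)\frac{\pi^2}{d^2}+2s\tilde\alpha,$$ and $$\tilde\lambda_2\ \ge\ (1+2s)\tilde\lambda_1+4s(1-s)\frac{\pi^2}{d^2}+2s\inf_{(-\frac d2,\frac d2)}\Big[\big(\tilde\phi_1'/\tilde\phi_1\big)^2-\tilde V\Big].$$ *)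

(* Defs.v *)
From Stdlib Require Import Reals.
Open Scope R_scope.

Definition in_open (d x : R) : Prop := - (d / 2) < x < d / 2.
Definition in_closed (d x : R) : Prop := - (d / 2) <= x <= d / 2.

Definition is_lower_bound (E : R -> Prop) (m : R) : Prop := forall x, E x -> m <= x.
Definition is_glb (E : R -> Prop) (m : R) : Prop :=
  is_lower_bound E m /\ (forall b, is_lower_bound E b -> b <= m).

Definition Dirichlet_eigenfunction (d : R) (V : R -> R) (lam : R)
    (u u' u'' : R -> R) : Prop :=
  (forall x, in_open d x ->
     derivable_pt_lim u x (u' x) /\ derivable_pt_lim u' x (u'' x) /\
     - u'' x + V x * u x = lam * u x) /\
  (forall x, in_closed d x -> limit1_in u (in_closed d) (u x) x) /\
  u (- (d / 2)) = 0 /\ u (d / 2) = 0 /\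
  (exists x, in_open d x /\ u x <> 0).

Definition Dirichlet_eigenvalue (d : R) (V : R -> R) (lam : R) : Prop :=
  exists u u' u'', Dirichlet_eigenfunction d V lam u u' u''.

(* Main.v *)
Require Import Defs.
From Stdlib Require Import Reals Lra Psatz Classical.
Open Scope R_scope.

Notation dpl := derivable_pt_lim.

Lemma dl_plus f g x a b : dpl f x a -> dpl g x b -> dpl (fun t => f t + g t) x (a+b).
Proof. intros; apply (derivable_pt_lim_plus f g); auto. Qed.
Lemma dl_minus f g x a b : dpl f x a -> dpl g x b -> dpl (fun t => f t - g t) x (a-b).
Proof. intros; apply (derivable_pt_lim_minus f g); auto. Qed.
Lemma dl_mult f g x a b : dpl f x a -> dpl g x b -> dpl (fun t => f t * g t) x (a * g x + f x * b).
Proof. intros; apply (derivable_pt_lim_mult f g); auto. Qed.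
Lemma dl_scal c f x a : dpl f x a -> dpl (fun t => c * f t) x (c * a).
Proof. intros; apply (derivable_pt_lim_scal f); auto. Qed.
Lemma dl_opp f x a : dpl f x a -> dpl (fun t => - f t) x (- a).
Proof. intros; apply (derivable_pt_lim_opp f); auto. Qed.
Lemma dl_comp f g x a b : dpl f x a -> dpl g (f x) b -> dpl (fun t => g (f t)) x (b * a).
Proof. intros; apply (derivable_pt_lim_comp f g); auto. Qed.
Lemma dl_id x : dpl (fun t => t) x 1.
Proof. apply derivable_pt_lim_id. Qed.
Lemma dl_const c x : dpl (fun _ => c) x 0.
Proof. apply (derivable_pt_lim_const c). Qed.
Lemma dl_ext f g x a b : (forall t, f t = g t) -> a = b -> dpl f x a -> dpl g x b.
Proof. intros He -> H e He'; destruct (H e He') as [d Hd]; exists d; intros h h0 hd;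
  rewrite <- !He; apply Hd; auto. Qed.
Lemma dl_cont f x a : dpl f x a -> continuity_pt f x.
Proof. intro H; apply (derivable_continuous_pt f x (exist _ a H)). Qed.
Lemma dl_refl f x a : dpl f (- x) a -> dpl (fun t => f (- t)) x (- a).
Proof. intro H. apply dl_ext with (f := fun t => f (- t)) (a := a * -1).
  intro; auto. ring.
  apply dl_comp with (f := fun t => - t). apply dl_ext with (fun t => - t) (-(1)); auto.
  apply dl_opp, dl_id. auto. Qed.

Lemma le_eps (r1 r2 : R) : (forall e, 0 < e -> r1 <= r2 + e) -> r1 <= r2.
Proof. intro H. destruct (Rle_or_lt r1 r2); auto.
  specialize (H ((r1 - r2)/2) ltac:(lra)). lra. Qed.

Lemma mvt_bound f f' u v B : u < v -> (forall c, u <= c <= v -> dpl f c (f' c)) ->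
  (forall c, u < c < v -> Rabs (f' c) <= B) -> Rabs (f v - f u) <= B * (v - u).
Proof. intros Huv Hd Hb. destruct (MVT_cor2 f f' u v Huv Hd) as [c [Hc Hc']].
  rewrite Hc, Rabs_mult, (Rabs_right (v-u)) by lra.
  apply Rmult_le_compat_r; [lra| apply Hb; auto]. Qed.

Lemma mvt_le f f' u v : u < v -> (forall c, u <= c <= v -> dpl f c (f' c)) ->
  (forall c, u < c < v -> f' c <= 0) -> f v <= f u.
Proof. intros Huv Hd Hb. destruct (MVT_cor2 f f' u v Huv Hd) as [c [Hc Hc']].
  specialize (Hb c Hc'). nra. Qed.

Lemma dl_exp_lin k x : dpl (fun t => exp (k * t)) x (exp (k * x) * k).
Proof. apply dl_ext with (f := fun t => exp (k * t)) (a := exp (k * x) * (k * 1)).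
  intro; auto. ring. apply dl_comp with (f := fun t => k * t). apply dl_scal, dl_id.
  apply derivable_pt_lim_exp. Qed.

Lemma big_left F (G : R -> R) p x0 : p < x0 -> (forall x, p < x <= x0 -> dpl F x (G x)) ->
  (forall N, exists x, p < x < x0 /\ F x < N) -> forall K, exists xi, p < xi < x0 /\ K < G xi.
Proof. intros Hp Hd Hu K. set (K' := Rabs K + 1).
  destruct (Hu (F x0 - K' * (x0 - p))) as [x [Hx HF]].
  destruct (MVT_cor2 F G x x0) as [c [Hc Hc']]; [lra| intros; apply Hd; lra|].
  exists c; split; [lra|].
  assert (K' * (x0 - x) < G c * (x0 - x)).
  { assert (K' * (x0 - x) <= K' * (x0 - p)). apply Rmult_le_compat_l; unfold K';
    pose proof (Rabs_pos K); lra. lra. }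
  apply Rmult_lt_reg_r in H; [|lra]. unfold K' in H. pose proof (Rle_abs K); lra. Qed.

Lemma big_right F (G : R -> R) q x0 : x0 < q -> (forall x, x0 <= x < q -> dpl F x (G x)) ->
  (forall N, exists x, x0 < x < q /\ F x < N) -> forall K, exists xi, x0 < xi < q /\ G xi < K.
Proof. intros Hp Hd Hu K. set (K' := Rabs K + 1).
  destruct (Hu (F x0 - K' * (q - x0))) as [x [Hx HF]].
  destruct (MVT_cor2 F G x0 x) as [c [Hc Hc']]; [lra| intros; apply Hd; lra|].
  exists c; split; [lra|].
  assert (G c * (x - x0) < (- K') * (x - x0)).
  { assert (K' * (x - x0) <= K' * (q - x0)). apply Rmult_le_compat_l; unfold K';
    pose proof (Rabs_pos K); lra. lra. }
  apply Rmult_lt_reg_r in H; [|lra]. unfold K' in H. pose proof (Rle_abs (-K)).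
  rewrite Rabs_Ropp in H0. lra. Qed.

Lemma atan_small eta : 0 < eta -> exists z, 0 < z /\ atan z < eta.
Proof. intro He. set (e := Rmin (eta/2) 1).
  assert (0 < e) by (unfold e; apply Rmin_pos; lra).
  assert (e <= eta/2) by apply Rmin_l. assert (e <= 1) by apply Rmin_r.
  pose proof PI2_3_2.
  exists (tan e); split. apply tan_gt_0; lra. rewrite atan_tan; lra. Qed.

Lemma riccati_contra (F G G' : R -> R) (p q x0 d eps c : R) :
  0 < d -> 0 < eps -> p < x0 < q -> q - p <= d ->
  (forall x, p < x < q -> dpl F x (G x) /\ dpl G x (G' x) /\ c - G x ^ 2 / eps <= G' x) ->
  (forall N, exists x, p < x < x0 /\ F x < N) ->
  (forall N, exists x, x0 < x < q /\ F x < N) ->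
  eps * (PI ^ 2 / d ^ 2) <= - c.
Proof. intros Hd He Hx Hpq HR Hl Hr.
  destruct (Rle_or_lt (eps * (PI ^ 2 / d ^ 2)) (-c)) as [H|H]; auto. exfalso.
  set (w2 := Rmax 0 (-c/eps)).
  assert (Hw0 : 0 <= w2) by apply Rmax_l.
  assert (Hw1 : -c/eps <= w2) by apply Rmax_r.
  pose proof PI_RGT_0 as HPI.
  assert (Hpd : 0 < PI / d) by (apply Rdiv_lt_0_compat; lra).
  assert (Hw2 : w2 < (PI/d)^2).
  { unfold w2, Rmax; destruct (Rle_dec 0 (-c/eps)). 
    - apply Rmult_lt_reg_l with eps; auto. unfold Rdiv. 
      replace (eps * (- c * / eps)) with (-c) by (field; lra).
      replace (eps * (PI * /d)^2) with (eps * (PI^2/d^2)) by (field; lra). lra.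
    - nra. }
  assert (Hsq : sqrt w2 < PI/d).
  { rewrite <- (sqrt_pow2 (PI/d)) by lra. apply sqrt_lt_1_alt; lra. }
  pose proof (sqrt_pos w2) as Hs0.
  set (om := (sqrt w2 + PI/d)/2).
  assert (Hom : 0 < om) by (unfold om; lra).
  assert (Hom2 : w2 <= om^2).
  { rewrite <- (Rsqr_sqrt w2) by lra. unfold Rsqr. unfold om. nra. }
  assert (Homd : om * d < PI).
  { assert (om < PI/d) by (unfold om; lra).
    apply Rmult_lt_compat_r with (r := d) in H0; auto. unfold Rdiv in H0.
    rewrite Rmult_assoc, Rinv_l, Rmult_1_r in H0; lra. }
  set (eta := (PI - om * d)/2).
  destruct (atan_small eta) as [z [Hz Hz']]. unfold eta; lra.
  set (T := /z).
  assert (HT : PI/2 - eta < atan T).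
  { unfold T. rewrite atan_inv by auto. lra. }
  assert (Hc : - (eps * om^2) <= c).
  { assert (-c/eps <= om^2) by lra. 
    apply Rmult_le_compat_l with (r := eps) in H0; [|lra].
    unfold Rdiv in H0. replace (eps * (-c * /eps)) with (-c) in H0 by (field; lra). lra. }
  set (th := fun t => atan (G t / (eps * om))).
  set (th' := fun t => G' t / (eps * om) / (1 + (G t / (eps * om))^2)).
  assert (Hth : forall x, p < x < q -> dpl th x (th' x)).
  { intros x Hx'. destruct (HR x Hx') as [_ [H2 _]]. unfold th, th'.
    assert (Hpos : 0 < eps * om) by nra.
    apply dl_ext with (f := fun t => atan (G t / (eps * om)))
      (a := / (1 + (G x / (eps * om))^2) * (G' x / (eps * om))).
    { intro; auto. }
    { field. assert (0 < (eps * om) ^ 2) by nra. repeat split; nra. }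
    apply dl_comp. apply dl_ext with (fun t => / (eps * om) * G t) (/(eps*om) * G' x).
    { intro; field; lra. } { field; lra. } { apply dl_scal; auto. } apply derivable_pt_lim_atan. }
  assert (Hthb : forall x, p < x < q -> - om <= th' x).
  { intros x Hx'. destruct (HR x Hx') as [_ [_ H3]]. unfold th'.
    set (r := G x) in *. set (r' := G' x) in *.
    assert (Hpos : 0 < eps * om) by nra.
    assert (E : r' / (eps * om) / (1 + (r / (eps * om)) ^ 2) = r' * (eps * om) / ((eps*om)^2 + r^2))
      by (field; nra).
    rewrite E. apply Rmult_le_reg_r with ((eps*om)^2 + r^2). nra.
    unfold Rdiv. rewrite Rmult_assoc, Rinv_l, Rmult_1_r by nra.
    assert (r' >= - (eps * om^2) - r^2/eps) by lra.
    assert (r' * eps >= - (eps*om)^2 - r^2).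
    { apply Rmult_ge_compat_r with (r := eps) in H0; [|lra].
      replace ((- (eps * om ^ 2) - r ^ 2 / eps) * eps) with (- (eps*om)^2 - r^2) in H0 by (field; lra). lra. }
    nra. }
  destruct (big_left F G p x0 ltac:(lra) ltac:(intros; apply HR; lra) Hl (eps * om * T))
    as [x1 [Hx1 HR1]].
  destruct (big_right F G q x0 ltac:(lra) ltac:(intros; apply HR; lra) Hr (- (eps * om * T)))
    as [x2 [Hx2 HR2]].
  assert (Hpos : 0 < eps * om) by nra.
  assert (H1 : atan T < th x1).
  { unfold th. apply atan_increasing. apply Rmult_lt_reg_l with (eps * om); auto.
    field_simplify; [lra| nra]. }
  assert (H2 : th x2 < - atan T).
  { unfold th. rewrite <- atan_opp. apply atan_increasing. apply Rmult_lt_reg_l with (eps * om); auto.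
    field_simplify; [lra| nra]. }
  destruct (MVT_cor2 th th' x1 x2) as [c0 [Hc0 Hc0']]; [lra| intros; apply Hth; lra|].
  assert (- om <= th' c0) by (apply Hthb; lra).
  assert (- om * d <= th' c0 * (x2 - x1)) by nra.
  unfold eta in HT. lra. Qed.

Lemma energy_deriv (f f' f'' : R -> R) x :
  dpl f x (f' x) -> dpl f' x (f'' x) ->
  dpl (fun t => f t * f t + f' t * f' t) x (2 * f x * f' x + 2 * f' x * f'' x).
Proof. intros H1 H2. eapply dl_ext; [intro; reflexivity| |].
  2:{ apply dl_plus; apply dl_mult; eauto. } ring. Qed.

Lemma energy (f f' f'' : R -> R) a b C :
  (forall x, a < x < b -> dpl f x (f' x) /\ dpl f' x (f'' x) /\ Rabs (f'' x) <= C * Rabs (f x)) ->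
  0 <= C -> forall x y, a < x < b -> a < y < b -> x <= y ->
  f y ^ 2 + f' y ^ 2 <= (f x ^ 2 + f' x ^ 2) * exp ((1 + C) * (y - x)) /\
  f x ^ 2 + f' x ^ 2 <= (f y ^ 2 + f' y ^ 2) * exp ((1 + C) * (y - x)).
Proof. intros Hf HC x y Hx Hy Hxy.
  set (K := 1 + C). set (E := fun t => f t * f t + f' t * f' t).
  set (E' := fun t => 2 * f t * f' t + 2 * f' t * f'' t).
  assert (HE : forall t, a < t < b -> dpl E t (E' t)).
  { intros t Ht; destruct (Hf t Ht) as [h1 [h2 _]]; apply energy_deriv; auto. }
  assert (HEb : forall t, a < t < b -> Rabs (E' t) <= K * E t).
  { intros t Ht; destruct (Hf t Ht) as [_ [_ h3]]. unfold E', E, K.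
    assert (Rabs (2 * f t * f' t + 2 * f' t * f'' t) <= 2 * Rabs (f t) * Rabs (f' t) + 2 * Rabs (f' t) * Rabs (f'' t)).
    { eapply Rle_trans; [apply Rabs_triang|]. rewrite !Rabs_mult, (Rabs_right 2) by lra. lra. }
    assert (Rabs (f' t) * Rabs (f'' t) <= Rabs (f' t) * (C * Rabs (f t))) by
      (apply Rmult_le_compat_l; [apply Rabs_pos| auto]).
    assert (2 * Rabs (f t) * Rabs (f' t) <= f t * f t + f' t * f' t).
    { pose proof (Rsqr_abs (f t)); pose proof (Rsqr_abs (f' t)); unfold Rsqr in *.
      pose proof (pow2_ge_0 (Rabs (f t) - Rabs (f' t))). nra. }
    assert (0 <= Rabs (f t) * Rabs (f' t)) by (apply Rmult_le_pos; apply Rabs_pos).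
    nra. }
  assert (EE : forall t, E t = f t ^ 2 + f' t ^ 2) by (intro; unfold E; ring).
  rewrite <- !EE.
  destruct (Req_dec x y) as [<-|Hne].
  { rewrite Rminus_diag, Rmult_0_r, exp_0, !Rmult_1_r. lra. }
  assert (Hlt : x < y) by lra.
  assert (Hsplit : exp (K * (y - x)) = exp (K * y) * exp (- K * x)).
  { rewrite <- exp_plus; f_equal; ring. }
  split.
  - set (G := fun t => E t * exp (- K * t)).
    assert (G y <= G x).
    { apply mvt_le with (f' := fun t => E' t * exp (- K * t) + E t * (exp (- K * t) * (- K))); auto.
      - intros c Hc. unfold G. apply (dl_mult E (fun t => exp (-K*t))). apply HE; lra.
        apply dl_exp_lin.
      - intros c Hc. specialize (HEb c ltac:(lra)). pose proof (exp_pos (- K * c)).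
        pose proof (Rle_abs (E' c)). nra. }
    unfold G in H. rewrite Hsplit. pose proof (exp_pos (K * y)).
    apply Rmult_le_compat_r with (r := exp (K * y)) in H; [|lra].
    replace (E y * exp (- K * y) * exp (K * y)) with (E y * (exp (- K * y) * exp (K * y))) in H by ring.
    rewrite <- exp_plus in H. replace (- K * y + K * y) with 0 in H by ring. rewrite exp_0 in H. lra.
  - set (G := fun t => - (E t * exp (K * t))).
    assert (G y <= G x).
    { apply mvt_le with (f' := fun t => - (E' t * exp (K * t) + E t * (exp (K * t) * K))); auto.
      - intros c Hc. unfold G. apply dl_opp. apply (dl_mult E (fun t => exp (K*t))). apply HE; lra.
        apply dl_exp_lin.
      - intros c Hc. specialize (HEb c ltac:(lra)). pose proof (exp_pos (K * c)).
        pose proof (Rle_abs (- E' c)). rewrite Rabs_Ropp in H0. nra. }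
    unfold G in H. rewrite Hsplit. pose proof (exp_pos (- K * x)).
    assert (Hu : exp (K * x) * exp (- K * x) = 1) by (rewrite <- exp_plus; replace (K * x + - K * x) with 0 by ring; apply exp_0).
    assert (HH : E x * exp (K * x) * exp (- K * x) <= E y * exp (K * y) * exp (- K * x)) by
      (apply Rmult_le_compat_r; lra).
    replace (E x * exp (K * x) * exp (- K * x)) with (E x * (exp (K * x) * exp (- K * x))) in HH by ring.
    rewrite Hu in HH. lra.
Qed.

Definition LZ (f : R -> R) a := forall eps, 0 < eps -> exists del, 0 < del /\
  forall x, a < x < a + del -> Rabs (f x) < eps.
Definition RZ (f : R -> R) b := forall eps, 0 < eps -> exists del, 0 < del /\
  forall x, b - del < x < b -> Rabs (f x) < eps.

Lemma frac_le D e : 0 <= D -> 0 < e -> D * (e / (D + 1)) < e.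
Proof. intros. assert (D * (e/(D+1)) = e - e/(D+1)) by (field; lra).
  assert (0 < e/(D+1)) by (apply Rdiv_lt_0_compat; lra). lra. Qed.

Lemma lin_left f f' a b B : (forall x, a < x < b -> dpl f x (f' x)) ->
  (forall x, a < x < b -> Rabs (f' x) <= B) -> LZ f a ->
  forall x, a < x < b -> Rabs (f x) <= B * (x - a).
Proof. intros Hd Hb Hz x Hx. assert (HB : 0 <= B) by (specialize (Hb x Hx); pose proof (Rabs_pos (f' x)); lra).
  apply le_eps. intros e He. destruct (Hz e He) as [del [Hdel Hd']].
  set (t := a + Rmin del (x - a) / 2).
  assert (Hm1 : Rmin del (x - a) <= del) by apply Rmin_l.
  assert (Hm2 : Rmin del (x - a) <= x - a) by apply Rmin_r.
  assert (Hm3 : 0 < Rmin del (x - a)) by (apply Rmin_pos; lra).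
  assert (Ht : a < t < x) by (unfold t; lra).
  specialize (Hd' t ltac:(unfold t; lra)).
  assert (Rabs (f x - f t) <= B * (x - t)).
  { apply mvt_bound with f'; [lra| intros; apply Hd; lra| intros; apply Hb; lra]. }
  assert (B * (x - t) <= B * (x - a)) by (apply Rmult_le_compat_l; lra).
  pose proof (Rabs_triang (f x - f t) (f t)). replace (f x - f t + f t) with (f x) in H1 by ring.
  lra. Qed.

Lemma cubic_left y yd a b A D : (forall x, a < x < b -> dpl y x (yd x)) ->
  (forall x, a < x < b -> Rabs (yd x) <= A * (x - a) ^ 2) ->
  (forall x, a < x < b -> Rabs (y x) <= D * (x - a)) -> 0 <= D ->
  forall x, a < x < b -> Rabs (y x) <= A * (x - a) ^ 3.
Proof. intros Hd Hb Hl HD x Hx.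
  assert (HA : 0 <= A).
  { specialize (Hb x Hx). pose proof (Rabs_pos (yd x)). 
    assert (0 < (x - a)^2) by (apply pow_lt; lra). nra. }
  apply le_eps. intros e He.
  set (t := a + Rmin (x - a) (e / (D + 1)) / 2).
  assert (Hm2 : Rmin (x - a) (e / (D+1)) <= x - a) by apply Rmin_l.
  assert (Hm1 : Rmin (x - a) (e / (D+1)) <= e / (D + 1)) by apply Rmin_r.
  assert (Hm3 : 0 < Rmin (x - a) (e / (D+1))) by (apply Rmin_pos; [lra| apply Rdiv_lt_0_compat; lra]).
  assert (Ht : a < t < x) by (unfold t; lra).
  assert (Rabs (y x - y t) <= (A * (x - a) ^ 2) * (x - t)).
  { apply mvt_bound with yd; [lra| intros; apply Hd; lra|].
    intros c Hc. eapply Rle_trans; [apply Hb; lra|]. apply Rmult_le_compat_l; auto.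
    apply pow_incr; lra. }
  assert (A * (x - a) ^ 2 * (x - t) <= A * (x - a) ^ 3).
  { replace (A * (x - a) ^ 3) with (A * (x - a) ^ 2 * (x - a)) by ring.
    apply Rmult_le_compat_l; [apply Rmult_le_pos; [auto| apply pow_le; lra]| lra]. }
  specialize (Hl t ltac:(lra)).
  assert (D * (t - a) <= e).
  { assert (t - a <= e / (D + 1)) by (unfold t; lra).
    apply Rle_trans with (D * (e / (D + 1))). apply Rmult_le_compat_l; lra.
    left; apply frac_le; lra. }
  pose proof (Rabs_triang (y x - y t) (y t)) as HT. replace (y x - y t + y t) with (y x) in HT by ring.
  lra. Qed.

Lemma lower_left f f' f'' a b B e0 :
  a < b ->
  (forall x, a < x < b -> dpl f x (f' x) /\ dpl f' x (f'' x)) ->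
  (forall x, a < x < b -> 0 < f x) ->
  (forall x, a < x < b -> Rabs (f x) <= B * (x - a)) -> 0 < e0 ->
  (forall x, a < x < b -> e0 <= f x ^ 2 + f' x ^ 2) ->
  exists del k, 0 < del /\ 0 < k /\ forall x, a < x < a + del -> x < b /\ k * (x - a) <= f x.
Proof. intros Hab Hd Hp Hl He0 He.
  assert (HB : 0 < B).
  { set (m := (a + b)/2). specialize (Hl m ltac:(unfold m; lra)). specialize (Hp m ltac:(unfold m; lra)).
    rewrite Rabs_right in Hl by lra. assert (0 < m - a) by (unfold m; lra). nra. }
  set (k := sqrt (e0 / 2)).
  assert (Hk : 0 < k) by (apply sqrt_lt_R0; lra).
  assert (Hk2 : k * k = e0 / 2) by (apply sqrt_sqrt; lra).
  set (del := Rmin ((b - a) / 2) (k / (B + 1))).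
  assert (Hm1 : del <= (b - a) / 2) by apply Rmin_l.
  assert (Hm2 : del <= k / (B + 1)) by apply Rmin_r.
  assert (Hm3 : 0 < del) by (apply Rmin_pos; [lra| apply Rdiv_lt_0_compat; lra]).
  assert (Hsq : forall x, a < x < a + del -> k * k < f' x * f' x).
  { intros x Hx. specialize (Hl x ltac:(lra)). specialize (He x ltac:(lra)).
    specialize (Hp x ltac:(lra)). rewrite Rabs_right in Hl by lra.
    assert (B * (x - a) < k).
    { apply Rle_lt_trans with (B * del). apply Rmult_le_compat_l; lra.
      apply Rle_lt_trans with (B * (k / (B + 1))). apply Rmult_le_compat_l; lra.
      apply frac_le; lra. }
    assert (f x * f x < k * k) by nra. nra. }
  assert (Hpos : forall t, a < t < a + del -> 0 < f' t).
  { intros t Ht. destruct (Rlt_or_le 0 (f' t)) as [H|H]; auto. exfalso.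
    assert (Hneg : forall s, a < s <= t -> f' s < 0).
    { intros s Hs. destruct (Rlt_or_le (f' s) 0) as [H1|H1]; auto. exfalso.
      destruct (Req_dec s t) as [->|Hst]. specialize (Hsq t Ht). nra.
      assert (Hs0 : 0 < f' s) by (specialize (Hsq s ltac:(lra)); nra).
      assert (Ht0 : f' t < 0) by (specialize (Hsq t Ht); nra).
      destruct (Ranalysis5.IVT_interv (fun u => - f' u) s t) as [z [Hz Hz']].
      - intros u Hu. apply continuity_pt_opp. destruct (Hd u ltac:(lra)) as [_ H2].
        eapply dl_cont; eauto.
      - lra. - lra. - lra.
      - specialize (Hsq z ltac:(lra)). nra. }
    set (t' := a + Rmin (t - a) (f t / (B + 1)) / 2).
    assert (Hn1 : Rmin (t - a) (f t / (B + 1)) <= t - a) by apply Rmin_l.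
    assert (Hn2 : Rmin (t - a) (f t / (B + 1)) <= f t / (B + 1)) by apply Rmin_r.
    assert (Hft : 0 < f t) by (apply Hp; lra).
    assert (Hn3 : 0 < Rmin (t - a) (f t / (B + 1))) by (apply Rmin_pos; [lra| apply Rdiv_lt_0_compat; lra]).
    assert (Ht' : a < t' < t) by (unfold t'; lra).
    destruct (MVT_cor2 f f' t' t) as [c [Hc Hc']]; [lra| intros c Hc; apply Hd; lra|].
    assert (f' c < 0) by (apply Hneg; lra).
    assert (f t < f t') by nra.
    specialize (Hl t' ltac:(lra)). rewrite Rabs_right in Hl by (specialize (Hp t' ltac:(lra)); lra).
    assert (B * (t' - a) < f t).
    { assert (t' - a < f t / (B + 1)) by (unfold t'; lra).
      apply Rle_lt_trans with (B * (f t / (B + 1))). apply Rmult_le_compat_l; lra.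
      apply frac_le; lra. }
    lra. }
  assert (Hge : forall t, a < t < a + del -> k <= f' t).
  { intros t Ht. specialize (Hpos t Ht). specialize (Hsq t Ht). nra. }
  exists del, k. repeat split; auto. lra.
  apply le_eps. intros e He'.
  set (t' := a + Rmin (x - a) (e / (k + 1)) / 2).
  assert (Hn1 : Rmin (x - a) (e / (k + 1)) <= x - a) by apply Rmin_l.
  assert (Hn2 : Rmin (x - a) (e / (k + 1)) <= e / (k + 1)) by apply Rmin_r.
  assert (Hn3 : 0 < Rmin (x - a) (e / (k + 1))) by (apply Rmin_pos; [lra| apply Rdiv_lt_0_compat; lra]).
  assert (Ht' : a < t' < x) by (unfold t'; lra).
  destruct (MVT_cor2 f f' t' x) as [c [Hc Hc']]; [lra| intros c Hc; apply Hd; lra|].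
  assert (k <= f' c) by (apply Hge; lra).
  assert (0 < f t') by (apply Hp; lra).
  assert (k * (t' - a) <= e).
  { assert (t' - a <= e / (k + 1)) by (unfold t'; lra).
    apply Rle_trans with (k * (e / (k + 1))). apply Rmult_le_compat_l; lra.
    left; apply frac_le; lra. }
  nra. Qed.

Lemma lin_right f f' a b B : (forall x, a < x < b -> dpl f x (f' x)) ->
  (forall x, a < x < b -> Rabs (f' x) <= B) -> RZ f b ->
  forall x, a < x < b -> Rabs (f x) <= B * (b - x).
Proof. intros Hd Hb Hz x Hx.
  pose proof (lin_left (fun t => f (- t)) (fun t => - f' (- t)) (-b) (-a) B) as L.
  assert (L' : Rabs (f (- - x)) <= B * (- x - - b)).
  { apply L; [| | |lra].
    - intros t Ht. apply dl_refl. apply Hd; lra.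
    - intros t Ht. rewrite Rabs_Ropp. apply Hb; lra.
    - intros e He. destruct (Hz e He) as [del [Hdel H]]. exists del; split; auto.
      intros t Ht. apply H; lra. }
  rewrite Ropp_involutive in L'. replace (b - x) with (- x - - b) by ring. auto. Qed.

Lemma cubic_right y yd a b A D : (forall x, a < x < b -> dpl y x (yd x)) ->
  (forall x, a < x < b -> Rabs (yd x) <= A * (b - x) ^ 2) ->
  (forall x, a < x < b -> Rabs (y x) <= D * (b - x)) -> 0 <= D ->
  forall x, a < x < b -> Rabs (y x) <= A * (b - x) ^ 3.
Proof. intros Hd Hb Hl HD x Hx.
  pose proof (cubic_left (fun t => y (- t)) (fun t => - yd (- t)) (-b) (-a) A D) as L.
  assert (L' : Rabs (y (- - x)) <= A * (- x - - b) ^ 3).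
  { apply L; [| | | auto |lra].
    - intros t Ht. apply dl_refl. apply Hd; lra.
    - intros t Ht. rewrite Rabs_Ropp. replace (t - - b) with (b - - t) by ring. apply Hb; lra.
    - intros t Ht. replace (t - - b) with (b - - t) by ring. apply Hl; lra. }
  rewrite Ropp_involutive in L'. replace (b - x) with (- x - - b) by ring. auto. Qed.

Lemma lower_right f f' f'' a b B e0 :
  a < b ->
  (forall x, a < x < b -> dpl f x (f' x) /\ dpl f' x (f'' x)) ->
  (forall x, a < x < b -> 0 < f x) ->
  (forall x, a < x < b -> Rabs (f x) <= B * (b - x)) -> 0 < e0 ->
  (forall x, a < x < b -> e0 <= f x ^ 2 + f' x ^ 2) ->
  exists del k, 0 < del /\ 0 < k /\ forall x, b - del < x < b -> a < x /\ k * (b - x) <= f x.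
Proof. intros Hab Hd Hp Hl He0 He.
  destruct (lower_left (fun t => f (- t)) (fun t => - f' (- t)) (fun t => f'' (- t)) (-b) (-a) B e0)
    as [del [k [Hdel [Hk H]]]]; auto; try lra.
  - intros t Ht. destruct (Hd (- t) ltac:(lra)) as [H1 H2]. split.
    + apply dl_refl; auto.
    + apply dl_ext with (fun t => - f' (- t)) (- - f'' (- t)); auto. ring.
      apply dl_opp, dl_refl; auto.
  - intros t Ht; apply Hp; lra.
  - intros t Ht. replace (t - - b) with (b - - t) by ring. apply Hl; lra.
  - intros t Ht. replace ((- f' (- t)) ^ 2) with (f' (- t) ^ 2) by ring. apply He; lra.
  - exists del, k; repeat split; auto.
    + destruct (H (- x) ltac:(lra)); lra.
    + destruct (H (- x) ltac:(lra)) as [_ H2]. rewrite Ropp_involutive in H2.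
      replace (b - x) with (- x - - b) by ring. auto. Qed.

Lemma cont_eps f x : continuity_pt f x -> forall e, 0 < e -> exists del, 0 < del /\
  forall t, Rabs (t - x) < del -> Rabs (f t - f x) < e.
Proof. intros H e He. unfold continuity_pt, continue_in, limit1_in, limit_in in H.
  destruct (H e He) as [del [Hdel H']]. exists del; split; auto. intros t Ht.
  destruct (Req_dec t x) as [->|Hne]. rewrite Rminus_diag, Rabs_R0; auto.
  apply (H' t). unfold D_x, no_cond; split; [split; auto| simpl; unfold R_dist; auto]. Qed.

Lemma nodal_left (y : R -> R) a x0 : a < x0 -> (forall t, a < t <= x0 -> continuity_pt y t) ->
  y x0 <> 0 -> exists p, a <= p < x0 /\ (p = a \/ (a < p /\ y p = 0)) /\
  forall t, p < t <= x0 -> y t <> 0.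
Proof. intros Hax Hc Hy.
  set (E := fun t => a <= t <= x0 /\ (t = a \/ y t = 0)).
  assert (Hb : bound E) by (exists x0; intros t [Ht _]; lra).
  assert (Hne : exists t, E t) by (exists a; split; [lra| auto]).
  destruct (completeness E Hb Hne) as [p [Hub Hlub]].
  assert (Hap : a <= p) by (apply Hub; split; [lra| auto]).
  assert (Hpx : p <= x0) by (apply Hlub; intros t [Ht _]; lra).
  assert (Hnz : forall t, p < t <= x0 -> y t <> 0).
  { intros t Ht Hyt. assert (t <= p) by (apply Hub; split; [lra| auto]). lra. }
  destruct (Req_dec p a) as [->|Hpa].
  - exists a. repeat split; auto; lra.
  - assert (Hyp : y p = 0).
    { destruct (Req_dec (y p) 0) as [|Hyp]; auto. exfalso.
      destruct (cont_eps y p (Hc p ltac:(lra)) (Rabs (y p)) ltac:(apply Rabs_pos_lt; auto))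
        as [del [Hdel Hd]].
      set (m := Rmin del (p - a)).
      assert (Hm : 0 < m) by (apply Rmin_pos; lra).
      assert (m <= del) by apply Rmin_l. assert (m <= p - a) by apply Rmin_r.
      assert (exists t, E t /\ p - m < t).
      { apply NNPP; intro Hn. assert (p <= p - m); [|lra].
        apply Hlub. intros t Ht. destruct (Rle_or_lt t (p - m)); auto.
        exfalso; apply Hn; exists t; auto. }
      destruct H1 as [t [[Ht1 Ht2] Ht3]].
      assert (t <= p) by (apply Hub; split; auto).
      destruct Ht2 as [->|Ht2]; [lra|].
      specialize (Hd t ltac:(rewrite Rabs_left1 by lra; lra)). rewrite Ht2 in Hd.
      replace (0 - y p) with (- y p) in Hd by ring. rewrite Rabs_Ropp in Hd. lra. }
    exists p. split; [split; auto|]. destruct (Req_dec p x0) as [->|]; [contradiction| lra].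
    split; auto. right; split; auto; lra. Qed.

Lemma nodal_right (y : R -> R) b x0 : x0 < b -> (forall t, x0 <= t < b -> continuity_pt y t) ->
  y x0 <> 0 -> exists q, x0 < q <= b /\ (q = b \/ (q < b /\ y q = 0)) /\
  forall t, x0 <= t < q -> y t <> 0.
Proof. intros Hbx Hc Hy.
  destruct (nodal_left (fun t => y (- t)) (- b) (- x0)) as [p [Hp1 [Hp2 Hp3]]].
  - lra.
  - intros t Ht. apply (continuity_pt_comp (fun t => - t) y). apply continuity_pt_opp. apply derivable_continuous_pt, derivable_pt_id.
    apply Hc; lra.
  - rewrite Ropp_involutive; auto.
  - exists (- p). split; [lra|]. split.
    + destruct Hp2 as [->|[H1 H2]]; [left; ring| right; split; [lra|]]. auto.
    + intros t Ht. replace t with (- - t) by ring. apply Hp3. lra. Qed.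

Lemma ln_le' x y : 0 < x -> x <= y -> ln x <= ln y.
Proof. intros Hx [H|H]. left; apply ln_increasing; auto. subst; lra. Qed.

Lemma ln_sq_half v : v <> 0 -> ln (v ^ 2) / 2 = ln (Rabs v).
Proof. intro H. replace (v ^ 2) with (Rabs v * Rabs v).
  rewrite ln_mult by (apply Rabs_pos_lt; auto). field.
  rewrite <- Rabs_mult. rewrite Rabs_right. ring. nra. Qed.

Lemma F_small_cubic (A k r yv pv s N : R) : 0 < A -> 0 < k -> 0 < r -> k * r <= 1 ->
  Rabs yv <= A * r ^ 3 -> yv <> 0 -> k * r <= pv -> 0 < s < 1 ->
  r < exp (N - ln A + 2 * ln k) -> ln (yv ^ 2) / 2 - 2 * s * ln pv < N.
Proof. intros HA Hk Hr Hkr Hy Hy0 Hp Hs Hrl.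
  rewrite ln_sq_half by auto.
  assert (H1 : ln (Rabs yv) <= ln A + 3 * ln r).
  { eapply Rle_trans. apply ln_le'; [apply Rabs_pos_lt; auto| apply Hy].
    rewrite ln_mult, ln_pow by (try apply pow_lt; lra). simpl INR. lra. }
  assert (H2 : ln (k * r) <= ln pv) by (apply ln_le'; [nra| auto]).
  assert (H3 : ln (k * r) <= 0) by (rewrite <- ln_1; apply ln_le'; nra).
  rewrite ln_mult in H2, H3 by lra.
  assert (H4 : ln r < N - ln A + 2 * ln k).
  { rewrite <- (ln_exp (N - ln A + 2 * ln k)). apply ln_increasing; auto. }
  assert (- 2 * s * ln pv <= - 2 * s * (ln k + ln r)) by nra.
  assert (- 2 * s * (ln k + ln r) <= - 2 * (ln k + ln r)) by nra.
  lra. Qed.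

Lemma F_small_int (w yv pv s N : R) : 0 < w -> w < pv -> yv <> 0 -> 0 < s < 1 ->
  Rabs yv < exp (N - 2 * Rabs (ln w)) -> ln (yv ^ 2) / 2 - 2 * s * ln pv < N.
Proof. intros Hw Hp Hy Hs Hyl. rewrite ln_sq_half by auto.
  assert (H1 : ln (Rabs yv) < N - 2 * Rabs (ln w)).
  { rewrite <- (ln_exp (N - 2 * Rabs (ln w))). apply ln_increasing; auto. apply Rabs_pos_lt; auto. }
  assert (H2 : ln w <= ln pv) by (apply ln_le'; lra).
  pose proof (Rle_abs (- ln w)). rewrite Rabs_Ropp in H.
  assert (- 2 * s * ln pv <= - 2 * s * ln w) by nra.
  assert (- 2 * s * ln w <= 2 * Rabs (ln w)) by (pose proof (Rle_abs (ln w)); nra).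
  lra. Qed.

Lemma abs_le_of_sq x c : x ^ 2 <= c -> Rabs x <= c + 1.
Proof. intro H. destruct (Rle_or_lt (Rabs x) (c + 1)) as [|H1]; auto.
  assert (0 <= c) by nra. pose proof (Rsqr_abs x). unfold Rsqr in H2.
  assert (x ^ 2 = Rabs x * Rabs x) by (simpl; lra). nra. Qed.

Lemma LZ_of_lim f d : 0 < d -> limit1_in f (in_closed d) (f (- (d/2))) (- (d/2)) ->
  f (- (d/2)) = 0 -> LZ f (- (d/2)).
Proof. intros Hd H H0 e He. destruct (H e He) as [al [Hal H']]. exists (Rmin al d).
  split. apply Rmin_pos; lra. intros x Hx.
  assert (Rmin al d <= al) by apply Rmin_l. assert (Rmin al d <= d) by apply Rmin_r.
  specialize (H' x). simpl in H'. unfold R_dist in H'. rewrite H0, Rminus_0_r in H'.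
  apply H'. split. unfold in_closed; lra. rewrite Rabs_right; lra. Qed.

Lemma RZ_of_lim f d : 0 < d -> limit1_in f (in_closed d) (f (d/2)) (d/2) ->
  f (d/2) = 0 -> RZ f (d/2).
Proof. intros Hd H H0 e He. destruct (H e He) as [al [Hal H']]. exists (Rmin al d).
  split. apply Rmin_pos; lra. intros x Hx.
  assert (Rmin al d <= al) by apply Rmin_l. assert (Rmin al d <= d) by apply Rmin_r.
  specialize (H' x). simpl in H'. unfold R_dist in H'. rewrite H0, Rminus_0_r in H'.
  apply H'. split. unfold in_closed; lra. rewrite Rabs_left; lra. Qed.

Lemma eig_bounds d V lam f f' f'' BV : 0 < d ->
  (forall x, in_closed d x -> Rabs (V x) <= BV) ->
  Dirichlet_eigenfunction d V lam f f' f'' ->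
  exists B K, 0 <= B /\ 0 < K /\ forall x, in_open d x ->
    Rabs (f' x) <= B /\ Rabs (f x) <= B * (x - - (d/2)) /\ Rabs (f x) <= B * (d/2 - x) /\
    f 0 ^ 2 + f' 0 ^ 2 <= (f x ^ 2 + f' x ^ 2) * K.
Proof. intros Hd HV [Heq [Hc [Ha [Hb _]]]].
  assert (HBV : 0 <= BV) by (specialize (HV 0 ltac:(unfold in_closed; lra)); pose proof (Rabs_pos (V 0)); lra).
  set (C := BV + Rabs lam).
  assert (HC : 0 <= C) by (unfold C; pose proof (Rabs_pos lam); lra).
  assert (Hf : forall x, - (d/2) < x < d/2 -> dpl f x (f' x) /\ dpl f' x (f'' x) /\ Rabs (f'' x) <= C * Rabs (f x)).
  { intros x Hx. destruct (Heq x Hx) as [h1 [h2 h3]]. repeat split; auto.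
    replace (f'' x) with ((V x - lam) * f x) by lra. rewrite Rabs_mult.
    apply Rmult_le_compat_r. apply Rabs_pos. unfold C.
    eapply Rle_trans. apply Rabs_triang. rewrite Rabs_Ropp. 
    assert (Rabs (V x) <= BV) by (apply HV; unfold in_closed; lra). lra. }
  set (K := exp ((1 + C) * d)).
  assert (HK : 0 < K) by apply exp_pos.
  set (E0 := f 0 ^ 2 + f' 0 ^ 2).
  assert (HE : forall x, - (d/2) < x < d/2 -> f x ^ 2 + f' x ^ 2 <= E0 * K /\ E0 <= (f x ^ 2 + f' x ^ 2) * K).
  { intros x Hx.
    assert (Hmon : forall u, u <= d -> exp ((1 + C) * u) <= K).
    { intros u Hu. unfold K. destruct (Req_dec u d) as [->|]; [lra|]. left; apply exp_increasing. 
      apply Rmult_lt_compat_l; lra. }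
    assert (0 <= f x ^ 2 + f' x ^ 2) by nra. assert (0 <= E0) by (unfold E0; nra).
    destruct (Rle_or_lt x 0).
    - destruct (energy f f' f'' (- (d/2)) (d/2) C Hf HC x 0) as [HH1 HH2]; try lra.
      specialize (Hmon (0 - x) ltac:(lra)). fold E0 in HH1, HH2. split; nra.
    - destruct (energy f f' f'' (- (d/2)) (d/2) C Hf HC 0 x) as [HH1 HH2]; try lra.
      specialize (Hmon (x - 0) ltac:(lra)). fold E0 in HH1, HH2. split; nra. }
  set (B := E0 * K + 1).
  assert (Hd' : forall x, - (d/2) < x < d/2 -> Rabs (f' x) <= B).
  { intros x Hx. apply abs_le_of_sq. destruct (HE x Hx). nra. }
  assert (HB : 0 <= B) by (specialize (Hd' 0 ltac:(lra)); pose proof (Rabs_pos (f' 0)); lra).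
  exists B, K. split; [auto|split; [auto|]]. intros x Hx. split; [|split; [|split]].
  - apply Hd'; auto.
  - apply (lin_left f f' (- (d/2)) (d/2) B); auto. intros; apply Hf; auto.
    apply LZ_of_lim; auto. apply Hc; unfold in_closed; lra.
  - apply (lin_right f f' (- (d/2)) (d/2) B); auto. intros; apply Hf; auto.
    apply RZ_of_lim; auto. apply Hc; unfold in_closed; lra.
  - apply HE; auto.
Qed.

Lemma small4 a b c e : 0 < a -> 0 < b -> 0 < c -> 0 < e ->
  exists r, 0 < r /\ r < a /\ r < b /\ r < c /\ r < e.
Proof. intros. exists (Rmin (Rmin a b) (Rmin c e) / 2).
  assert (Rmin (Rmin a b) (Rmin c e) <= Rmin a b) by apply Rmin_l.
  assert (Rmin (Rmin a b) (Rmin c e) <= Rmin c e) by apply Rmin_r.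
  assert (Rmin a b <= a) by apply Rmin_l. assert (Rmin a b <= b) by apply Rmin_r.
  assert (Rmin c e <= c) by apply Rmin_l. assert (Rmin c e <= e) by apply Rmin_r.
  assert (0 < Rmin (Rmin a b) (Rmin c e)) by (repeat apply Rmin_pos; auto).
  lra. Qed.

Lemma unb_left (y phi : R -> R) a p x0 s :
  a <= p < x0 -> (p = a \/ (a < p /\ y p = 0)) -> (forall t, p < t <= x0 -> y t <> 0) ->
  (forall t, a < t <= x0 -> continuity_pt y t /\ continuity_pt phi t /\ 0 < phi t) ->
  (exists A, 0 < A /\ forall t, a < t <= x0 -> Rabs (y t) <= A * (t - a) ^ 3) ->
  (exists del k, 0 < del /\ 0 < k /\ forall t, a < t < a + del -> k * (t - a) <= phi t) ->
  0 < s < 1 ->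
  forall N, exists x, p < x < x0 /\ ln (y x ^ 2) / 2 - 2 * s * ln (phi x) < N.
Proof. intros Hp Hcase Hnz Hc [A [HA Hcub]] [del [k [Hdel [Hk Hlow]]]] Hs N.
  destruct Hcase as [->|[Hap Hyp]].
  - destruct (small4 del (x0 - a) (/ k) (exp (N - ln A + 2 * ln k))) as [r [Hr [H1 [H2 [H3 H4]]]]];
      try lra; try apply Rinv_0_lt_compat; auto; try apply exp_pos.
    exists (a + r). split; [lra|].
    apply F_small_cubic with A k r; auto.
    + assert (k * r <= k * / k) by (apply Rmult_le_compat_l; lra). rewrite Rinv_r in H by lra. lra.
    + replace r with (a + r - a) at 2 by ring. apply Hcub; lra.
    + apply Hnz; lra.
    + replace r with (a + r - a) at 1 by ring. apply Hlow; lra.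
  - destruct (Hc p ltac:(lra)) as [Hcy [Hcp Hpp]].
    set (w := phi p / 2).
    destruct (cont_eps phi p Hcp w ltac:(unfold w; lra)) as [d1 [Hd1 Hd1']].
    destruct (cont_eps y p Hcy (exp (N - 2 * Rabs (ln w))) (exp_pos _)) as [d2 [Hd2 Hd2']].
    destruct (small4 d1 d2 (x0 - p) 1) as [r [Hr [H1 [H2 [H3 H4]]]]]; try lra.
    exists (p + r). split; [lra|].
    apply F_small_int with w; auto.
    + unfold w; lra.
    + specialize (Hd1' (p + r) ltac:(replace (p + r - p) with r by ring; rewrite Rabs_right; lra)).
      pose proof (Rle_abs (phi p - phi (p + r))). rewrite Rabs_minus_sym in Hd1'. unfold w in *. lra.
    + apply Hnz; lra.
    + specialize (Hd2' (p + r) ltac:(replace (p + r - p) with r by ring; rewrite Rabs_right; lra)).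
      rewrite Hyp, Rminus_0_r in Hd2'. auto.
Qed.

Lemma unb_right (y phi : R -> R) b q x0 s :
  x0 < q <= b -> (q = b \/ (q < b /\ y q = 0)) -> (forall t, x0 <= t < q -> y t <> 0) ->
  (forall t, x0 <= t < b -> continuity_pt y t /\ continuity_pt phi t /\ 0 < phi t) ->
  (exists A, 0 < A /\ forall t, x0 <= t < b -> Rabs (y t) <= A * (b - t) ^ 3) ->
  (exists del k, 0 < del /\ 0 < k /\ forall t, b - del < t < b -> k * (b - t) <= phi t) ->
  0 < s < 1 ->
  forall N, exists x, x0 < x < q /\ ln (y x ^ 2) / 2 - 2 * s * ln (phi x) < N.
Proof. intros Hp Hcase Hnz Hc [A [HA Hcub]] [del [k [Hdel [Hk Hlow]]]] Hs N.
  destruct Hcase as [->|[Hap Hyp]].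
  - destruct (small4 del (b - x0) (/ k) (exp (N - ln A + 2 * ln k))) as [r [Hr [H1 [H2 [H3 H4]]]]];
      try lra; try apply Rinv_0_lt_compat; auto; try apply exp_pos.
    exists (b - r). split; [lra|].
    apply F_small_cubic with A k r; auto.
    + assert (k * r <= k * / k) by (apply Rmult_le_compat_l; lra). rewrite Rinv_r in H by lra. lra.
    + replace r with (b - (b - r)) at 2 by ring. apply Hcub; lra.
    + apply Hnz; lra.
    + replace r with (b - (b - r)) at 1 by ring. apply Hlow; lra.
  - destruct (Hc q ltac:(lra)) as [Hcy [Hcp Hpp]].
    set (w := phi q / 2).
    destruct (cont_eps phi q Hcp w ltac:(unfold w; lra)) as [d1 [Hd1 Hd1']].
    destruct (cont_eps y q Hcy (exp (N - 2 * Rabs (ln w))) (exp_pos _)) as [d2 [Hd2 Hd2']].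
    destruct (small4 d1 d2 (q - x0) 1) as [r [Hr [H1 [H2 [H3 H4]]]]]; try lra.
    exists (q - r). split; [lra|].
    apply F_small_int with w; auto.
    + unfold w; lra.
    + specialize (Hd1' (q - r) ltac:(replace (q - r - q) with (- r) by ring; rewrite Rabs_Ropp, Rabs_right; lra)).
      pose proof (Rle_abs (phi q - phi (q - r))). rewrite Rabs_minus_sym in Hd1'. unfold w in *. lra.
    + apply Hnz; lra.
    + specialize (Hd2' (q - r) ltac:(replace (q - r - q) with (- r) by ring; rewrite Rabs_Ropp, Rabs_right; lra)).
      rewrite Hyp, Rminus_0_r in Hd2'. auto.
Qed.

Lemma nz_point (y : R -> R) l x a b : a < x < b -> dpl y x l -> l <> 0 ->
  exists x0, a < x0 < b /\ y x0 <> 0.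
Proof. intros Hx Hd Hl. destruct (Req_dec (y x) 0) as [Hy|Hy]; [|exists x; auto].
  apply NNPP; intro Hn.
  assert (Hz : forall t, a < t < b -> y t = 0).
  { intros t Ht. apply NNPP; intro; apply Hn; exists t; auto. }
  destruct (Hd (Rabs l) (Rabs_pos_lt _ Hl)) as [del Hdel].
  destruct (small4 del (b - x) 1 1) as [h [Hh [H1 [H2 _]]]]; try lra. apply cond_pos.
  specialize (Hdel h ltac:(lra) ltac:(rewrite Rabs_right; lra)).
  rewrite (Hz (x + h)), Hy in Hdel by lra.
  replace ((0 - 0) / h - l) with (- l) in Hdel by (field; lra). rewrite Rabs_Ropp in Hdel. lra. Qed.

Lemma core d V V' lam1 lam2 phi phi' phi'' L1 L2 u u' u'' s M :
  0 < d -> (forall x, dpl V x (V' x)) ->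
  Dirichlet_eigenfunction d V lam2 u u' u'' -> lam1 < lam2 ->
  Dirichlet_eigenfunction d V lam1 phi phi' phi'' -> (forall x, in_open d x -> 0 < phi x) ->
  (forall x, in_open d x -> dpl (fun t => ln (phi t)) x (L1 x) /\ dpl L1 x (L2 x)) ->
  0 < s < 1 -> (forall t, in_open d t -> L2 t <= M) ->
  lam2 - lam1 >= 4 * s * (1 - s) * (PI ^ 2 / d ^ 2) + 2 * s * (- M).
Proof. intros Hd HV Hu Hlam Hphi Hpos HL Hs HM.
  set (a := - (d/2)). set (b := d/2).
  destruct (continuity_ab_maj (fun x => Rabs (V x)) a b) as [Mx [HMx _]].
  { unfold a, b; lra. }
  { intros c Hc. apply (continuity_pt_comp V Rabs). eapply dl_cont; apply HV.
    apply Rcontinuity_abs. }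
  set (BV := Rabs (V Mx)).
  assert (HBV : forall x, in_closed d x -> Rabs (V x) <= BV) by (intros; apply HMx; auto).
  destruct (eig_bounds d V lam1 phi phi' phi'' BV Hd HBV Hphi) as [Bp [Kp [HBp [HKp Hbp]]]].
  destruct (eig_bounds d V lam2 u u' u'' BV Hd HBV Hu) as [Bu [Ku [HBu [HKu Hbu]]]].
  destruct Hphi as [Hpe [Hpc _]]. destruct Hu as [Hue [Huc [_ [_ [xs [Hxs Huxs]]]]]].
  set (mu := lam2 - lam1).
  set (y := fun t => phi t * u' t - phi' t * u t).
  set (yd := fun t => (- mu) * (phi t * u t)).
  set (ydd := fun t => (- mu) * (phi' t * u t + phi t * u' t)).
  assert (Hy : forall x, in_open d x -> dpl y x (yd x) /\ dpl yd x (ydd x)).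
  { intros x Hx. destruct (Hpe x Hx) as [p1 [p2 p3]]. destruct (Hue x Hx) as [u1 [u2 u3]].
    split.
    - apply dl_ext with y (phi' x * u' x + phi x * u'' x - (phi'' x * u x + phi' x * u' x)); auto.
      unfold yd, mu. nra.
      apply dl_minus; apply dl_mult; auto.
    - apply dl_scal. apply dl_mult; auto. }
  assert (HL1 : forall x, in_open d x -> L1 x = phi' x / phi x).
  { intros x Hx. destruct (HL x Hx) as [H1 _]. apply (uniqueness_limite _ x _ _ H1).
    specialize (Hpos x Hx). destruct (Hpe x Hx) as [p1 _].
    apply dl_ext with (fun t => ln (phi t)) (/ phi x * phi' x); auto. field; lra.
    apply dl_comp; auto. apply derivable_pt_lim_ln; auto. }
  assert (Hmu : 0 < mu) by (unfold mu; lra).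
  destruct (nz_point y (yd xs) xs a b Hxs (proj1 (Hy xs Hxs))) as [x0 [Hx0 Hyx0]].
  { unfold yd. specialize (Hpos xs Hxs). intro H. apply Huxs.
    apply Rmult_integral in H. destruct H as [H|H]; [lra|]. apply Rmult_integral in H; destruct H; lra. }
  destruct (nodal_left y a x0) as [p [Hp1 [Hp2 Hp3]]]; try lra; auto.
  { intros t Ht. eapply dl_cont. apply (Hy t). unfold in_open; fold a b; lra. }
  destruct (nodal_right y b x0) as [q [Hq1 [Hq2 Hq3]]]; try lra; auto.
  { intros t Ht. eapply dl_cont. apply (Hy t). unfold in_open; fold a b; lra. }
  set (eps := 4 * s * (1 - s)).
  set (c := 2 * s * (- M) - mu).
  set (F := fun t => ln (y t ^ 2) / 2 - 2 * s * ln (phi t)).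
  set (G := fun t => yd t / y t - 2 * s * L1 t).
  set (G' := fun t => (ydd t * y t - yd t * yd t) / (y t) ^ 2 - 2 * s * L2 t).
  assert (Hin : forall x, p < x < q -> in_open d x /\ y x <> 0).
  { intros x Hx. split. unfold in_open; fold a b; lra.
    destruct (Rle_or_lt x x0); [apply Hp3| apply Hq3]; lra. }
  assert (Heps : 0 < eps) by (unfold eps; nra).
  assert (Hmain : eps * (PI ^ 2 / d ^ 2) <= - c).
  { apply (riccati_contra F G G' p q x0 d eps c); auto; try lra.
    - unfold a, b in *; lra.
    - intros x Hx. destruct (Hin x Hx) as [Hxi Hyx]. destruct (HL x Hxi) as [HL1' HL2'].
      destruct (Hy x Hxi) as [Hy1 Hy2]. pose proof (Hpos x Hxi) as Hpx.
      assert (Hy2p : 0 < y x ^ 2) by (simpl; rewrite Rmult_1_r; apply Rsqr_pos_lt; auto).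
      split; [|split].
      + assert (Hsq : dpl (fun t => y t ^ 2) x (2 * y x * yd x)).
        { apply dl_ext with (fun t => y t * y t) (yd x * y x + y x * yd x). intro; ring. ring.
          apply dl_mult; auto. }
        assert (Hln : dpl (fun t => ln (y t ^ 2)) x (/ (y x ^ 2) * (2 * y x * yd x))).
        { apply dl_comp; auto. apply derivable_pt_lim_ln; auto. }
        apply dl_ext with (fun t => / 2 * ln (y t ^ 2) - 2 * s * ln (phi t))
          (/ 2 * (/ (y x ^ 2) * (2 * y x * yd x)) - 2 * s * L1 x).
        intro; unfold F; field. unfold G; field; auto.
        apply dl_minus; apply dl_scal; auto.
      + apply dl_ext with (fun t => yd t / y t - 2 * s * L1 t)
          ((ydd x * y x - yd x * yd x) / Rsqr (y x) - 2 * s * L2 x); auto.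
        unfold G'. unfold Rsqr. field; auto.
        apply dl_minus. apply (derivable_pt_lim_div yd y); auto. apply dl_scal; auto.
      + assert (Hydd : ydd x = 2 * (phi' x / phi x) * yd x - mu * y x) by (unfold ydd, yd, y; field; lra).
        set (t := yd x / y x). set (h := L1 x).
        assert (E1 : G' x = 2 * h * t - mu - t ^ 2 - 2 * s * L2 x).
        { unfold G', h, t. rewrite Hydd, HL1 by auto. field; split; [auto| lra]. }
        assert (E2 : G x = t - 2 * s * h) by (unfold G; auto).
        rewrite E1, E2.
        assert (Hk : 2 * h * t - t ^ 2 + (t - 2 * s * h) ^ 2 / eps = ((1 - 2 * s) * t + 2 * s * h) ^ 2 / eps).
        { unfold eps; field; split; lra. }
        assert (0 <= ((1 - 2 * s) * t + 2 * s * h) ^ 2 / eps).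
        { unfold Rdiv; apply Rmult_le_pos; [apply pow2_ge_0| left; apply Rinv_0_lt_compat; auto]. }
        assert (2 * s * L2 x <= 2 * s * M) by (specialize (HM x Hxi); nra).
        unfold c. lra.
    - apply unb_left with a; auto; try lra.
      + intros t Ht. assert (Hti : in_open d t) by (unfold in_open; fold a b; lra).
        split; [|split]. eapply dl_cont; apply (Hy t Hti). eapply dl_cont; apply (Hpe t Hti). auto.
      + exists (mu * Bp * Bu + 1). split. assert (0 <= mu * Bp * Bu) by (apply Rmult_le_pos; [apply Rmult_le_pos|]; lra). lra.
        intros t Ht. 
        assert (Hc3 : forall x, a < x < b -> Rabs (y x) <= mu * Bp * Bu * (x - a) ^ 3).
        { apply (cubic_left y yd a b (mu * Bp * Bu) (2 * Bp * Bu)).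
          - intros; apply Hy; unfold in_open; fold a b; lra.
          - intros z Hz. assert (Hzi : in_open d z) by (unfold in_open; fold a b; lra).
            destruct (Hbp z Hzi) as [_ [Hb1 _]]. destruct (Hbu z Hzi) as [_ [Hb2 _]].
            unfold yd. rewrite Rabs_mult, Rabs_mult, Rabs_Ropp, (Rabs_right mu) by lra.
            fold a in Hb1, Hb2. pose proof (Rabs_pos (phi z)). pose proof (Rabs_pos (u z)).
            assert (Rabs (phi z) * Rabs (u z) <= (Bp * (z - a)) * (Bu * (z - a))) by
              (apply Rmult_le_compat; auto).
            replace (mu * Bp * Bu * (z - a) ^ 2) with (mu * ((Bp * (z - a)) * (Bu * (z - a)))) by ring.
            apply Rmult_le_compat_l; lra.
          - intros z Hz. assert (Hzi : in_open d z) by (unfold in_open; fold a b; lra).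
            destruct (Hbp z Hzi) as [Hd1 [Hb1 _]]. destruct (Hbu z Hzi) as [Hd2 [Hb2 _]].
            fold a in Hb1, Hb2. unfold y.
            eapply Rle_trans. unfold Rminus at 1. apply Rabs_triang. rewrite Rabs_Ropp, !Rabs_mult.
            pose proof (Rabs_pos (phi z)). pose proof (Rabs_pos (u z)).
            pose proof (Rabs_pos (phi' z)). pose proof (Rabs_pos (u' z)).
            assert (Rabs (phi z) * Rabs (u' z) <= (Bp * (z - a)) * Bu) by (apply Rmult_le_compat; auto).
            assert (Rabs (phi' z) * Rabs (u z) <= Bp * (Bu * (z - a))) by (apply Rmult_le_compat; auto).
            nra.
          - nra. }
        specialize (Hc3 t ltac:(lra)). assert (0 < (t - a) ^ 3) by (apply pow_lt; lra). nra.
      + set (E0 := phi 0 ^ 2 + phi' 0 ^ 2).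
        assert (HE0 : 0 < E0) by (assert (0 < phi 0) by (apply Hpos; unfold in_open; lra); unfold E0; nra).
        destruct (lower_left phi phi' phi'' a b Bp (E0 / Kp)) as [del [k [Hdel [Hk Hlow]]]].
        * unfold a, b; lra.
        * intros x Hx; destruct (Hpe x ltac:(unfold in_open; fold a b; lra)) as [p1 [p2 _]]; auto.
        * intros x Hx; apply Hpos; unfold in_open; fold a b; lra.
        * intros x Hx. destruct (Hbp x ltac:(unfold in_open; fold a b; lra)) as [_ [H _]]. auto.
        * apply Rdiv_lt_0_compat; auto.
        * intros x Hx. destruct (Hbp x ltac:(unfold in_open; fold a b; lra)) as [_ [_ [_ H]]].
          fold E0 in H. apply Rmult_le_reg_r with Kp; auto. unfold Rdiv. rewrite Rmult_assoc, Rinv_l; lra.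
        * exists del, k; repeat split; auto. intros t Ht; apply Hlow; auto.
    - apply unb_right with b; auto; try lra.
      + intros t Ht. assert (Hti : in_open d t) by (unfold in_open; fold a b; lra).
        split; [|split]. eapply dl_cont; apply (Hy t Hti). eapply dl_cont; apply (Hpe t Hti). auto.
      + exists (mu * Bp * Bu + 1). split. assert (0 <= mu * Bp * Bu) by (apply Rmult_le_pos; [apply Rmult_le_pos|]; lra). lra.
        intros t Ht. 
        assert (Hc3 : forall x, a < x < b -> Rabs (y x) <= mu * Bp * Bu * (b - x) ^ 3).
        { apply (cubic_right y yd a b (mu * Bp * Bu) (2 * Bp * Bu)).
          - intros; apply Hy; unfold in_open; fold a b; lra.
          - intros z Hz. assert (Hzi : in_open d z) by (unfold in_open; fold a b; lra).
            destruct (Hbp z Hzi) as [_ [_ [Hb1 _]]]. destruct (Hbu z Hzi) as [_ [_ [Hb2 _]]].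
            unfold yd. rewrite Rabs_mult, Rabs_mult, Rabs_Ropp, (Rabs_right mu) by lra.
            fold b in Hb1, Hb2. pose proof (Rabs_pos (phi z)). pose proof (Rabs_pos (u z)).
            assert (Rabs (phi z) * Rabs (u z) <= (Bp * (b - z)) * (Bu * (b - z))) by
              (apply Rmult_le_compat; auto).
            replace (mu * Bp * Bu * (b - z) ^ 2) with (mu * ((Bp * (b - z)) * (Bu * (b - z)))) by ring.
            apply Rmult_le_compat_l; lra.
          - intros z Hz. assert (Hzi : in_open d z) by (unfold in_open; fold a b; lra).
            destruct (Hbp z Hzi) as [Hd1 [_ [Hb1 _]]]. destruct (Hbu z Hzi) as [Hd2 [_ [Hb2 _]]].
            fold b in Hb1, Hb2. unfold y.
            eapply Rle_trans. unfold Rminus at 1. apply Rabs_triang. rewrite Rabs_Ropp, !Rabs_mult.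
            pose proof (Rabs_pos (phi z)). pose proof (Rabs_pos (u z)).
            pose proof (Rabs_pos (phi' z)). pose proof (Rabs_pos (u' z)).
            assert (Rabs (phi z) * Rabs (u' z) <= (Bp * (b - z)) * Bu) by (apply Rmult_le_compat; auto).
            assert (Rabs (phi' z) * Rabs (u z) <= Bp * (Bu * (b - z))) by (apply Rmult_le_compat; auto).
            nra.
          - nra. }
        specialize (Hc3 t ltac:(lra)). assert (0 < (b - t) ^ 3) by (apply pow_lt; lra). nra.
      + set (E0 := phi 0 ^ 2 + phi' 0 ^ 2).
        assert (HE0 : 0 < E0) by (assert (0 < phi 0) by (apply Hpos; unfold in_open; lra); unfold E0; nra).
        destruct (lower_right phi phi' phi'' a b Bp (E0 / Kp)) as [del [k [Hdel [Hk Hlow]]]].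
        * unfold a, b; lra.
        * intros x Hx; destruct (Hpe x ltac:(unfold in_open; fold a b; lra)) as [p1 [p2 _]]; auto.
        * intros x Hx; apply Hpos; unfold in_open; fold a b; lra.
        * intros x Hx. destruct (Hbp x ltac:(unfold in_open; fold a b; lra)) as [_ [_ [H _]]]. auto.
        * apply Rdiv_lt_0_compat; auto.
        * intros x Hx. destruct (Hbp x ltac:(unfold in_open; fold a b; lra)) as [_ [_ [_ H]]].
          fold E0 in H. apply Rmult_le_reg_r with Kp; auto. unfold Rdiv. rewrite Rmult_assoc, Rinv_l; lra.
        * exists del, k; repeat split; auto. intros t Ht; apply Hlow; auto. }
  unfold c in Hmain. lra.
Qed.

Lemma dl_local (f g : R -> R) x l del : 0 < del -> (forall z, Rabs (z - x) < del -> f z = g z) ->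
  dpl f x l -> dpl g x l.
Proof. intros Hdel Hloc H e He. destruct (H e He) as [d0 Hd0].
  assert (Hp : 0 < Rmin d0 del) by (apply Rmin_pos; [apply cond_pos| auto]).
  exists (mkposreal _ Hp). intros h hn hlt. simpl in hlt.
  assert (Rmin d0 del <= d0) by apply Rmin_l. assert (Rmin d0 del <= del) by apply Rmin_r.
  rewrite <- !Hloc. apply Hd0; auto. lra.
  rewrite Rminus_diag, Rabs_R0; auto. replace (x + h - x) with h by ring; lra. Qed.

Theorem mainTheorem5 (d : R) (V V' : R -> R) (lam1 lam2 : R)
    (phi phi' phi'' L1 L2 : R -> R) :
  0 < d ->
  (forall x, derivable_pt_lim V x (V' x)) -> continuity V' ->
  (forall x, in_closed d x -> V (- x) = V x) ->
  Dirichlet_eigenvalue d V lam1 ->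
  (forall mu, Dirichlet_eigenvalue d V mu -> lam1 <= mu) ->
  Dirichlet_eigenvalue d V lam2 -> lam1 < lam2 ->
  (forall mu, Dirichlet_eigenvalue d V mu -> lam1 < mu -> lam2 <= mu) ->
  Dirichlet_eigenfunction d V lam1 phi phi' phi'' ->
  (forall x, in_open d x -> 0 < phi x) ->
  (forall x, in_open d x ->
     derivable_pt_lim (fun t => ln (phi t)) x (L1 x) /\
     derivable_pt_lim L1 x (L2 x)) ->
  forall s, 0 < s < 1 ->
  (forall M, is_lub (fun y => exists t, in_open d t /\ y = L2 t) M ->
     lam2 - lam1 >= 4 * s * (1 - s) * (PI ^ 2 / d ^ 2) + 2 * s * (- M)) /\
  (forall m, is_glb (fun y => exists t, in_open d t /\
                          y = (phi' t / phi t) ^ 2 - V t) m ->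
     lam2 >= (1 + 2 * s) * lam1 + 4 * s * (1 - s) * (PI ^ 2 / d ^ 2) + 2 * s * m).
Proof. intros Hd HV _ _ _ _ [u [u' [u'' Hu]]] Hlam _ Hphi Hpos HL s Hs. split.
  - intros M [HM _]. apply (core d V V' lam1 lam2 phi phi' phi'' L1 L2 u u' u'' s M); auto.
    intros t Ht. apply HM. exists t; auto.
  - intros m [Hm _].
    assert (HL2 : forall t, in_open d t -> L2 t <= - lam1 - m).
    { intros t Ht. 
      assert (Hmt : m <= (phi' t / phi t) ^ 2 - V t) by (apply Hm; exists t; auto).
      assert (Heq : L2 t = V t - lam1 - (phi' t / phi t) ^ 2).
      { destruct (HL t Ht) as [_ H2]. apply (uniqueness_limite L1 t _ _ H2).
        destruct Hphi as [Hpe _].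
        assert (HL1 : forall x, in_open d x -> phi' x / phi x = L1 x).
        { intros x Hx. destruct (HL x Hx) as [H1 _]. symmetry. apply (uniqueness_limite _ x _ _ H1).
          specialize (Hpos x Hx). destruct (Hpe x Hx) as [p1 _].
          apply dl_ext with (fun t => ln (phi t)) (/ phi x * phi' x); auto. field; lra.
          apply dl_comp; auto. apply derivable_pt_lim_ln; auto. }
        unfold in_open in Ht.
        apply dl_local with (fun z => phi' z / phi z) (Rmin (t + d/2) (d/2 - t)).
        apply Rmin_pos; lra.
        { intros z Hz. apply HL1. unfold in_open.
          assert (Rmin (t + d/2) (d/2 - t) <= t + d/2) by apply Rmin_l.
          assert (Rmin (t + d/2) (d/2 - t) <= d/2 - t) by apply Rmin_r.
          destruct (Rabs_def2 _ _ Hz). lra. }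
        destruct (Hpe t Ht) as [p1 [p2 p3]]. specialize (Hpos t Ht).
        apply dl_ext with (fun z => phi' z / phi z) ((phi'' t * phi t - phi' t * phi' t) / Rsqr (phi t)); auto.
        unfold Rsqr. replace (phi'' t) with ((V t - lam1) * phi t) by lra. field; lra.
        apply (derivable_pt_lim_div phi' phi); auto. lra. }
      lra. }
    pose proof (core d V V' lam1 lam2 phi phi' phi'' L1 L2 u u' u'' s (- lam1 - m) Hd HV Hu Hlam Hphi Hpos HL Hs HL2).
    assert (E : 2 * s * - (- lam1 - m) = 2 * s * lam1 + 2 * s * m) by ring.
    rewrite E in H. nra.
Qed.
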